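(* Let $S = R \cup B$ be a finite set of points in the plane in general position (no three collinear), partitioned into red points $R$ and blue points $B$, with $|R| \ge 2$ and $|B| \ge 2$. Then $S$ contains a balanced $4$-hole.
   Context: A hole of $S$ is a simple polygon $Q$ whose vertices are points of $S$ and whose interior contains no point of $S$; a $k$-hole is a hole with $k$ vertices. Holes need not be convex. A $4$-hole is balanced if it has exactly two red and two blue vertices. *)

(* Defs.v *)
From HB Require Import structures.
From mathcomp Require Import all_boot all_order all_algebra.
Set Implicit Arguments. Unset Strict Implicit. Unset Printing Implicit Defensive.
Import Order.TTheory GRing.Theory Num.Theory.
Local Open Scope ring_scope.

Section Geom.
Variable R : realFieldType.
Definition point := (R * R)%type.

(* twice the signed area of triangle pqr *)
Definition orient (p q r : point) : R :=
  (q.1 - p.1) * (r.2 - p.2) - (q.2 - p.2) * (r.1 - p.1).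

Definition general_position (S : seq point) : Prop :=
  forall p q r, p \in S -> q \in S -> r \in S ->
    p != q -> q != r -> p != r -> orient p q r != 0.

Definition on_seg (p a b : point) : Prop :=
  exists t : R, 0 <= t <= 1 /\
    p = (a.1 + t * (b.1 - a.1), a.2 + t * (b.2 - a.2)).

Definition in_tri (p a b c : point) : Prop :=
  exists u v w : R, [/\ 0 <= u, 0 <= v, 0 <= w, u + v + w = 1 &
    p = (u * a.1 + v * b.1 + w * c.1, u * a.2 + v * b.2 + w * c.2)].

Definition simple_quad (a b c d : point) : Prop :=
  [/\ uniq [:: a; b; c; d],
      ~ (exists p, on_seg p a b /\ on_seg p c d),
      ~ (exists p, on_seg p b c /\ on_seg p d a) &
      [/\ forall p, on_seg p a b -> on_seg p b c -> p = b,
          forall p, on_seg p b c -> on_seg p c d -> p = c,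
          forall p, on_seg p c d -> on_seg p d a -> p = d &
          forall p, on_seg p d a -> on_seg p a b -> p = a]].

Definition on_boundary (p a b c d : point) : Prop :=
  [\/ on_seg p a b, on_seg p b c, on_seg p c d | on_seg p d a].

(* Closed region bounded by the simple quadrilateral a-b-c-d-a: it is the
   union of the two triangles cut out by an internal diagonal.  The diagonal
   ac is internal iff b and d lie strictly on opposite sides of line ac;
   otherwise (for a simple quadrilateral) bd is internal. *)
Definition in_region (p a b c d : point) : Prop :=
  if orient a c b * orient a c d < 0
  then in_tri p a b c \/ in_tri p a c d
  else in_tri p b a d \/ in_tri p b c d.

Definition in_interior (p a b c d : point) : Prop :=
  in_region p a b c d /\ ~ on_boundary p a b c d.

Definition hole4 (S : seq point) (a b c d : point) : Prop :=
  [/\ all (fun x => x \in S) [:: a; b; c; d],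
      simple_quad a b c d &
      forall s, s \in S -> ~ in_interior s a b c d].

End Geom.

(* Main.v *)
Require Import Defs.
From HB Require Import structures.
From mathcomp Require Import all_boot all_order all_algebra.
From mathcomp Require Import ring lra.
From Stdlib Require Import Classical_Prop.
Import Order.TTheory GRing.Theory Num.Theory.
Set Implicit Arguments. Unset Strict Implicit.

Section Helpers.
Local Open Scope ring_scope.
Variable R : realFieldType.
Implicit Types p a b c d : point R.

Definition hull4 p a b c d : Prop :=
  exists x y z w : R, [/\ 0 <= x, 0 <= y, 0 <= z, 0 <= w &
   [/\ 0 < x + y + z + w,
     (x + y + z + w) * p.1 = x * a.1 + y * b.1 + z * c.1 + w * d.1 &
     (x + y + z + w) * p.2 = x * a.2 + y * b.2 + z * c.2 + w * d.2]].

Lemma hull4_s12 p a b c d : hull4 p a b c d -> hull4 p b a c d.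
Proof.
case=> x [y [z [w [? ? ? ? [H E1 E2]]]]]; exists y, x, z, w.
have e : y + x + z + w = x + y + z + w by ring.
by split=> //; rewrite e E1 E2; split=> //; ring.
Qed.

Lemma hull4_s23 p a b c d : hull4 p a b c d -> hull4 p a c b d.
Proof.
case=> x [y [z [w [? ? ? ? [H E1 E2]]]]]; exists x, z, y, w.
have e : x + z + y + w = x + y + z + w by ring.
by split=> //; rewrite e E1 E2; split=> //; ring.
Qed.

Lemma hull4_s34 p a b c d : hull4 p a b c d -> hull4 p a b d c.
Proof.
case=> x [y [z [w [? ? ? ? [H E1 E2]]]]]; exists x, y, w, z.
have e : x + y + w + z = x + y + z + w by ring.
by split=> //; rewrite e E1 E2; split=> //; ring.
Qed.

Lemma hull4_mono s t a b c d :
  hull4 s a b c d -> hull4 t s b c d -> hull4 t a b c d.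
Proof.
case=> l1 [l2 [l3 [l4 [? ? ? ? [HS F1 F2]]]]].
case=> x1 [x2 [x3 [x4 [? ? ? ? [HX E1 E2]]]]].
set SL := l1 + l2 + l3 + l4 in HS F1 F2.
set SX := x1 + x2 + x3 + x4 in HX E1 E2.
exists (x1 * l1), (x1 * l2 + SL * x2), (x1 * l3 + SL * x3), (x1 * l4 + SL * x4).
have e : x1 * l1 + (x1 * l2 + SL * x2) + (x1 * l3 + SL * x3) + (x1 * l4 + SL * x4)
   = SL * SX by rewrite /SL /SX; ring.
split; rewrite ?e; first by apply: mulr_ge0.
- by apply: addr_ge0; apply: mulr_ge0 => //; rewrite /SL; lra.
- by apply: addr_ge0; apply: mulr_ge0 => //; rewrite /SL; lra.
- by apply: addr_ge0; apply: mulr_ge0 => //; rewrite /SL; lra.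
split; first by apply: mulr_gt0.
- have -> : SL * SX * t.1 = SL * (SX * t.1) by ring.
  rewrite E1.
  have -> : SL * (x1 * s.1 + x2 * b.1 + x3 * c.1 + x4 * d.1) =
     x1 * (SL * s.1) + SL * (x2 * b.1 + x3 * c.1 + x4 * d.1) by ring.
  rewrite F1; ring.
- have -> : SL * SX * t.2 = SL * (SX * t.2) by ring.
  rewrite E2.
  have -> : SL * (x1 * s.2 + x2 * b.2 + x3 * c.2 + x4 * d.2) =
     x1 * (SL * s.2) + SL * (x2 * b.2 + x3 * c.2 + x4 * d.2) by ring.
  rewrite F2; ring.
Qed.


Definition hull3 p a b c : Prop :=
  exists x y z : R, [/\ 0 <= x, 0 <= y, 0 <= z &
   [/\ 0 < x + y + z,
     (x + y + z) * p.1 = x * a.1 + y * b.1 + z * c.1 &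
     (x + y + z) * p.2 = x * a.2 + y * b.2 + z * c.2]].

Lemma pt_eq (p q : point R) : p.1 = q.1 -> p.2 = q.2 -> p = q.
Proof. by case: p q => ? ? [? ?] /= -> ->. Qed.

Lemma exch1 t v1 v2 u w :
  hull4 v1 t v2 u w -> hull4 t v1 v2 u w -> v1 <> t -> hull3 v1 v2 u w.
Proof.
case=> al [be [ga [de [? ? ? ? [HS E1 E2]]]]].
case=> l1 [l2 [l3 [l4 [? ? ? ? [HL F1 F2]]]]] Hne.
exists ((l1+l2+l3+l4) * be + al * l2), ((l1+l2+l3+l4) * ga + al * l3),
       ((l1+l2+l3+l4) * de + al * l4).
have e : (l1 + l2 + l3 + l4) * be + al * l2 + ((l1 + l2 + l3 + l4) * ga + al * l3) +
    ((l1 + l2 + l3 + l4) * de + al * l4) =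
    (l1 + l2 + l3 + l4) * (al + be + ga + de) - al * l1 by ring.
have pos : 0 < (l1 + l2 + l3 + l4) * (al + be + ga + de) - al * l1.
  rewrite -e.
  have h0 : 0 <= (l1 + l2 + l3 + l4) * be + al * l2 + ((l1 + l2 + l3 + l4) * ga + al * l3) +
    ((l1 + l2 + l3 + l4) * de + al * l4).
    by nra.
  rewrite lt0r h0 andbT; apply/eqP=> h.
  have hb : be = 0 by nra.
  have hg : ga = 0 by nra.
  have hd : de = 0 by nra.
  have ha : 0 < al by move: HS; rewrite hb hg hd !addr0.
  move: HS E1 E2; rewrite hb hg hd !mul0r !addr0 => _ E1 E2.
  apply: Hne; apply: pt_eq.
  - by apply: (mulfI (lt0r_neq0 ha)).
  - by apply: (mulfI (lt0r_neq0 ha)).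
split; first by nra.
- by nra.
- by nra.
rewrite e; split=> //.
- have -> : ((l1 + l2 + l3 + l4) * (al + be + ga + de) - al * l1) * v1.1 =
    (l1 + l2 + l3 + l4) * ((al + be + ga + de) * v1.1) - al * l1 * v1.1 by ring.
  rewrite E1.
  have -> : (l1 + l2 + l3 + l4) * (al * t.1 + be * v2.1 + ga * u.1 + de * w.1) =
    al * ((l1 + l2 + l3 + l4) * t.1) + (l1 + l2 + l3 + l4) * (be * v2.1 + ga * u.1 + de * w.1) by ring.
  rewrite F1; ring.
- have -> : ((l1 + l2 + l3 + l4) * (al + be + ga + de) - al * l1) * v1.2 =
    (l1 + l2 + l3 + l4) * ((al + be + ga + de) * v1.2) - al * l1 * v1.2 by ring.
  rewrite E2.
  have -> : (l1 + l2 + l3 + l4) * (al * t.2 + be * v2.2 + ga * u.2 + de * w.2) =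
    al * ((l1 + l2 + l3 + l4) * t.2) + (l1 + l2 + l3 + l4) * (be * v2.2 + ga * u.2 + de * w.2) by ring.
  rewrite F2; ring.
Qed.


Lemma exch2 v1 v2 u w :
  hull3 v1 v2 u w -> hull3 v2 v1 u w -> v1 <> v2 -> orient u w v1 = 0.
Proof.
case=> A [B [C [? ? ? [HK E1 E2]]]].
case=> A' [B' [C' [? ? ? [HK' F1 F2]]]] Hne.
have key1 : (A * (B' + C') + (B + C) * (A' + B' + C')) * v1.1 =
   (A * B' + (A' + B' + C') * B) * u.1 + (A * C' + (A' + B' + C') * C) * w.1.
  have -> : (A * (B' + C') + (B + C) * (A' + B' + C')) * v1.1 =
     (A' + B' + C') * ((A + B + C) * v1.1) - A * A' * v1.1 by ring.
  rewrite E1.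
  have -> : (A' + B' + C') * (A * v2.1 + B * u.1 + C * w.1) =
     A * ((A' + B' + C') * v2.1) + (A' + B' + C') * (B * u.1 + C * w.1) by ring.
  rewrite F1; ring.
have key2 : (A * (B' + C') + (B + C) * (A' + B' + C')) * v1.2 =
   (A * B' + (A' + B' + C') * B) * u.2 + (A * C' + (A' + B' + C') * C) * w.2.
  have -> : (A * (B' + C') + (B + C) * (A' + B' + C')) * v1.2 =
     (A' + B' + C') * ((A + B + C) * v1.2) - A * A' * v1.2 by ring.
  rewrite E2.
  have -> : (A' + B' + C') * (A * v2.2 + B * u.2 + C * w.2) =
     A * ((A' + B' + C') * v2.2) + (A' + B' + C') * (B * u.2 + C * w.2) by ring.
  rewrite F2; ring.
have [Mz|Mnz] := eqVneq (A * (B' + C') + (B + C) * (A' + B' + C')) 0.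
  have hB : B = 0 by nra.
  have hC : C = 0 by nra.
  move: HK E1 E2; rewrite hB hC !mul0r !addr0 => HK E1 E2.
  exfalso; apply: Hne; apply: pt_eq.
  - by apply: (mulfI (lt0r_neq0 HK)).
  - by apply: (mulfI (lt0r_neq0 HK)).
apply: (mulfI Mnz); rewrite mulr0.
have -> : (A * (B' + C') + (B + C) * (A' + B' + C')) * orient u w v1 =
  (w.1 - u.1) * ((A * (B' + C') + (B + C) * (A' + B' + C')) * v1.2 - (A * (B' + C') + (B + C) * (A' + B' + C')) * u.2)
  - (w.2 - u.2) * ((A * (B' + C') + (B + C) * (A' + B' + C')) * v1.1 - (A * (B' + C') + (B + C) * (A' + B' + C')) * u.1)
  by rewrite /orient; ring.
rewrite key1 key2; ring.
Qed.


Lemma exchange t v1 v2 u w :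
  hull4 t v1 v2 u w -> v1 <> t -> v2 <> t -> v1 <> v2 -> orient u w v1 != 0 ->
  ~ (hull4 v1 t v2 u w /\ hull4 v2 v1 t u w).
Proof.
move=> Ht n1 n2 n12 Ho [H1 H2].
have h1 := exch1 H1 Ht n1.
have h2 := exch1 (hull4_s12 H2) (hull4_s12 Ht) n2.
by move: Ho; rewrite (exch2 h1 h2 n12) eqxx.
Qed.

Lemma adj_seg x y z p : orient x y z != 0 -> on_seg p x y -> on_seg p y z -> p = y.
Proof.
move=> Ho [t [_ ->]] [s [_ E]]; case: E => e1 e2.
have hs : s * orient x y z = 0.
  have -> : s * orient x y z = (y.1 - x.1) * ((y.2 + s * (z.2 - y.2)) - x.2)
       - (y.2 - x.2) * ((y.1 + s * (z.1 - y.1)) - x.1) by rewrite /orient; ring.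
  rewrite -e1 -e2; ring.
move: hs => /eqP; rewrite mulf_eq0 (negbTE Ho) orbF => /eqP hs.
by rewrite e1 e2 hs !mul0r !addr0; case: (y).
Qed.

Lemma on_seg_sym p x y : on_seg p x y -> on_seg p y x.
Proof.
move=> [t [/andP [h0 h1] ->]]; exists (1 - t); split.
  by apply/andP; split; lra.
by congr (_, _); ring.
Qed.

Lemma opp_seg p a b c d : orient a c b * orient a c d < 0 -> a != c ->
  on_seg p a b -> on_seg p c d -> False.
Proof.
move=> Hneg Hac [t [/andP [t0 t1] E1]] [s [/andP [s0 s1] E2]].
have e : t * orient a c b = s * orient a c d.
  have -> : t * orient a c b = orient a c p by rewrite E1 /orient /=; ring.
  by rewrite E2 /orient /=; ring.
move: e Hneg; move: (orient a c b) (orient a c d) => B D e Hneg.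
have ht : t = 0.
  have h1 : t * (B * B) = s * (B * D) by rewrite mulrA e; ring.
  have h2 : 0 < B * B by nra.
  have h3 : t * (B * B) <= 0 by rewrite h1; nra.
  nra.
have hs : s = 0.
  have h1 : s * (D * D) = t * (B * D) by rewrite mulrA -e; ring.
  have h2 : 0 < D * D by nra.
  have h3 : s * (D * D) <= 0 by rewrite h1; nra.
  nra.
move: E1 E2; rewrite ht hs !mul0r !addr0 => E1 E2.
have ea : a = (a.1, a.2) by case: (a).
have ec : c = (c.1, c.2) by case: (c).
by move: Hac; rewrite ea ec -E1 -E2 eqxx.
Qed.

Lemma simple_quadP a b c d :
  uniq [:: a; b; c; d] -> orient a c b * orient a c d < 0 ->
  orient a b c != 0 -> orient b c d != 0 -> orient c d a != 0 -> orient d a b != 0 ->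
  simple_quad a b c d.
Proof.
move=> U Hneg o1 o2 o3 o4.
have Hac : a != c by apply/eqP => E; move: U; rewrite E /= !inE eqxx !orbT.
split=> //.
- by case=> p [h1 h2]; exact: (opp_seg Hneg Hac h1 h2).
- case=> p [h1 h2]; apply: (opp_seg (a:=a) (b:=d) (c:=c) (d:=b) (p:=p)) => //.
  + by rewrite mulrC.
  + exact: on_seg_sym.
  + exact: on_seg_sym.
split=> p h1 h2.
- exact: (adj_seg o1 h1 h2).
- exact: (adj_seg o2 h1 h2).
- exact: (adj_seg o3 h1 h2).
- exact: (adj_seg o4 h1 h2).
Qed.

Lemma in_tri_hull p a b c d : in_tri p a b c -> hull4 p a b c d.
Proof.
case=> u [v [w [u0 v0 w0 s1 ->]]]; exists u, v, w, 0.
rewrite addr0 s1 !mul1r !mul0r !addr0; split=> //; split=> //=.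
Qed.

Lemma region_hull p a b c d : in_region p a b c d -> hull4 p a b c d.
Proof.
rewrite /in_region; case: ifP => _ [] h.
- exact: in_tri_hull.
- exact: hull4_s23 (hull4_s34 (in_tri_hull b h)).
- exact: hull4_s12 (hull4_s34 (in_tri_hull c h)).
- exact: hull4_s12 (hull4_s23 (hull4_s34 (in_tri_hull a h))).
Qed.

Lemma on_seg_l p q : on_seg p p q.
Proof. by exists 0; rewrite lexx ler01 !mul0r !addr0; split=> //; case: (p). Qed.

Lemma hole_of (S : seq (point R)) a b c d :
  all (fun x => x \in S) [:: a; b; c; d] ->
  uniq [:: a; b; c; d] -> orient a c b * orient a c d < 0 ->
  orient a b c != 0 -> orient b c d != 0 -> orient c d a != 0 -> orient d a b != 0 ->
  (forall t, t \in S -> t != a -> t != b -> t != c -> t != d -> ~ hull4 t a b c d) ->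
  hole4 S a b c d.
Proof.
move=> HS U Hneg o1 o2 o3 o4 Hemp; split=> //; first exact: simple_quadP.
move=> s sS [Hr Hb]; have [sQ|sQ] := boolP (s \in [:: a; b; c; d]).
  apply: Hb; move: sQ; rewrite !inE => /or4P [] /eqP ->.
  - by apply: Or41; apply: on_seg_l.
  - by apply: Or42; apply: on_seg_l.
  - by apply: Or43; apply: on_seg_l.
  - by apply: Or44; apply: on_seg_l.
move: sQ; rewrite !inE !negb_or => /and4P [n1 n2 n3 n4].
exact: (Hemp s sS n1 n2 n3 n4 (region_hull Hr)).
Qed.


Lemma hull4_cdab p a b c d : hull4 p a b c d -> hull4 p c d a b.
Proof. by move=> h; apply: hull4_s23; apply: hull4_s34; apply: hull4_s12; apply: hull4_s23. Qed.

Ltac dist := rewrite /= !inE; repeat (apply/andP; split); rewrite ?negb_or;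
  repeat (apply/andP; split); first [done | assumption | rewrite eq_sym; assumption].

Lemma final (S : seq (point R)) r1 r2 b1 b2 :
  general_position S -> r1 \in S -> r2 \in S -> b1 \in S -> b2 \in S ->
  r1 != r2 -> b1 != b2 -> r1 != b1 -> r1 != b2 -> r2 != b1 -> r2 != b2 ->
  (forall t, t \in S -> t != r1 -> t != r2 -> t != b1 -> t != b2 -> ~ hull4 t r1 r2 b1 b2) ->
  [\/ hole4 S r1 b1 r2 b2, hole4 S r1 r2 b1 b2 | hole4 S r1 r2 b2 b1].
Proof.
move=> GP s1 s2 s3 s4 d1 d2 d3 d4 d5 d6 Hemp.
have e1 : orient r1 b1 r2 = - orient r1 r2 b1 by rewrite /orient; ring.
have e2 : orient r1 b2 r2 = - orient r1 r2 b2 by rewrite /orient; ring.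
have e3 : orient r1 b2 b1 = - orient r1 b1 b2 by rewrite /orient; ring.
have oA : orient r1 r2 b1 != 0 by apply: GP => //; rewrite eq_sym.
have oB : orient r1 r2 b2 != 0 by apply: GP => //; rewrite eq_sym.
have oC : orient r1 b1 b2 != 0 by apply: GP => //; rewrite eq_sym.
have all4 : forall a b c d, a \in S -> b \in S -> c \in S -> d \in S ->
   all (fun x => x \in S) [:: a; b; c; d] by move=> a b c d *; rewrite /= !andbT; apply/and4P.
have [h1|h1] := ltrP (orient r1 r2 b1 * orient r1 r2 b2) 0.
  { apply: Or31; apply: hole_of => //.
  all: try (apply: GP; (try done); rewrite eq_sym; done).
  all: try (exact: all4).
  all: try (by dist).
  try by move=> t tS n1 n2 n3 n4 /hull4_s23; apply: Hemp. }
have [h2|h2] := ltrP (orient r1 b1 r2 * orient r1 b1 b2) 0.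
  { apply: Or32; apply: hole_of => //.
  all: try (apply: GP; (try done); rewrite eq_sym; done).
  all: try (exact: all4).
  all: try (by dist).
  }
have [h3|h3] := ltrP (orient r1 b2 r2 * orient r1 b2 b1) 0.
  { apply: Or33; apply: hole_of => //.
  all: try (apply: GP; (try done); rewrite eq_sym; done).
  all: try (exact: all4).
  all: try (by dist).
  try by move=> t tS n1 n2 n3 n4 /hull4_s34; apply: Hemp. }
exfalso; move: h2 h3; rewrite e1 e2 e3.
move: h1 oA oB oC; move: (orient r1 r2 b1) (orient r1 r2 b2) (orient r1 b1 b2) => A B C h1 oA oB oC h2 h3.
have pA : 0 < A * A by rewrite lt0r sqrf_eq0 oA /= -expr2 sqr_ge0.
have pB : 0 < B * B by rewrite lt0r sqrf_eq0 oB /= -expr2 sqr_ge0.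
have pC : 0 < C * C by rewrite lt0r sqrf_eq0 oC /= -expr2 sqr_ge0.
have hAB : 0 < A * B by rewrite lt_def h1 andbT mulf_neq0.
have e4 : - B * - C = B * C by ring.
have e5 : - A * C = - (A * C) by ring.
rewrite e4 e5 oppr_ge0 in h3 h2.
have hBC : 0 < B * C by rewrite lt_def h3 andbT mulf_neq0.
have hAC : A * C < 0 by rewrite lt_def h2 andbT eq_sym mulf_neq0.
have : 0 < (A * B) * (B * C) by apply: mulr_gt0.
have -> : (A * B) * (B * C) = (A * C) * (B * B) by ring.
nra.
Qed.


Lemma step (P : pred (point R)) t v1 v2 u w (L : seq (point R)) :
  hull4 t v1 v2 u w -> v1 != t -> v2 != t -> v1 != v2 -> orient u w v1 != 0 ->
  (forall x, P x -> x != v1 -> x != v2 -> x != u -> x != w -> hull4 x v1 v2 u w -> x \in L) ->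
  (forall x, P x -> x != t -> x != v2 -> x != u -> x != w -> hull4 x t v2 u w ->
      x \in [seq y <- L | y != t]) \/
  (forall x, P x -> x != v1 -> x != t -> x != u -> x != w -> hull4 x v1 t u w ->
      x \in [seq y <- L | y != t]).
Proof.
move=> Ht n1 n2 n12 Ho HL.
have NE := exchange Ht (elimN eqP n1) (elimN eqP n2) (elimN eqP n12) Ho.
case: (classic (hull4 v1 t v2 u w)) => h.
- right=> x Px x1 xt xu xw Hx; rewrite mem_filter xt /=.
  have hx : hull4 x v1 v2 u w.
    exact: hull4_s12 (hull4_mono (hull4_s12 Ht) (hull4_s12 Hx)).
  apply: HL => //; apply/eqP => E; apply: NE; split=> //; by rewrite -E.
- left=> x Px xt x2 xu xw Hx; rewrite mem_filter xt /=.
  have hx : hull4 x v1 v2 u w by exact: hull4_mono Ht Hx.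
  apply: HL => //; apply/eqP => E; apply: h; by rewrite -E.
Qed.

Lemma size_filter_lt (L : seq (point R)) x : x \in L -> (size [seq y <- L | y != x] < size L)%N.
Proof.
move=> xL; rewrite size_filter -(count_predC (pred1 x) L).
have : (0 < count (pred1 x) L)%N by rewrite -has_count has_pred1.
have -> : count (fun y => y != x) L = count (predC (pred1 x)) L by apply: eq_count.
move: (count (pred1 x) L) (count (predC (pred1 x)) L) => m k.
by move=> h; rewrite -[X in (X < _)%N]add0n ltn_add2r.
Qed.


Lemma final2 (red blue : seq (point R)) r1 r2 b1 b2 :
  [seq x <- red | x \in blue] = [::] -> general_position (red ++ blue) ->
  r1 \in red -> r2 \in red -> b1 \in blue -> b2 \in blue -> r1 != r2 -> b1 != b2 ->
  (forall t, t \in red ++ blue -> t != r1 -> t != r2 -> t != b1 -> t != b2 ->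
      ~ hull4 t r1 r2 b1 b2) ->
  exists a b c d : point R,
    hole4 (red ++ blue) a b c d /\
    count (fun x => x \in red) [:: a; b; c; d] = 2%N /\
    count (fun x => x \in blue) [:: a; b; c; d] = 2%N.
Proof.
move=> Hdis GP hr1 hr2 hb1 hb2 d12 e12 Hemp.
have dj : forall x, x \in red -> x \in blue -> False.
  move=> x xr xb; have : x \in [seq x <- red | x \in blue] by rewrite mem_filter xb xr.
  by rewrite Hdis.
have dnb : forall x y, x \in red -> y \in blue -> x != y.
  by move=> x y xr yb; apply/eqP => E; apply: (dj x xr); rewrite E.
have rS : forall x, x \in red -> x \in red ++ blue by move=> x xr; rewrite mem_cat xr.
have bS : forall x, x \in blue -> x \in red ++ blue by move=> x xb; rewrite mem_cat xb orbT.
have nr : forall x, x \in blue -> (x \in red) = false.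
  by move=> x xb; apply/negP => xr; apply: (dj x).
have nb : forall x, x \in red -> (x \in blue) = false.
  by move=> x xr; apply/negP => xb; apply: (dj x).
have := final GP (rS _ hr1) (rS _ hr2) (bS _ hb1) (bS _ hb2) d12 e12
   (dnb _ _ hr1 hb1) (dnb _ _ hr1 hb2) (dnb _ _ hr2 hb1) (dnb _ _ hr2 hb2) Hemp.
case=> H.
+ exists r1, b1, r2, b2; split=> //.
  by rewrite /= hr1 hr2 (nr _ hb1) (nr _ hb2) hb1 hb2 (nb _ hr1) (nb _ hr2).
+ exists r1, r2, b1, b2; split=> //.
  by rewrite /= hr1 hr2 (nr _ hb1) (nr _ hb2) hb1 hb2 (nb _ hr1) (nb _ hr2).
+ exists r1, r2, b2, b1; split=> //.
  by rewrite /= hr1 hr2 (nr _ hb1) (nr _ hb2) hb1 hb2 (nb _ hr1) (nb _ hr2).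
Qed.

Lemma main_ind (red blue : seq (point R)) :
  [seq x <- red | x \in blue] = [::] -> general_position (red ++ blue) ->
  forall n r1 r2 b1 b2 (L : seq (point R)),
  r1 \in red -> r2 \in red -> b1 \in blue -> b2 \in blue -> r1 != r2 -> b1 != b2 ->
  (size L <= n)%N ->
  (forall x, x \in red ++ blue -> x != r1 -> x != r2 -> x != b1 -> x != b2 ->
     hull4 x r1 r2 b1 b2 -> x \in L) ->
  exists a b c d : point R,
    hole4 (red ++ blue) a b c d /\
    count (fun x => x \in red) [:: a; b; c; d] = 2%N /\
    count (fun x => x \in blue) [:: a; b; c; d] = 2%N.
Proof.
move=> Hdis GP.
have dj : forall x, x \in red -> x \in blue -> False.
  move=> x xr xb; have : x \in [seq x <- red | x \in blue] by rewrite mem_filter xb xr.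
  by rewrite Hdis.
have dnb : forall x y, x \in red -> y \in blue -> x != y.
  by move=> x y xr yb; apply/eqP => E; apply: (dj x xr); rewrite E.
elim=> [|n IH] r1 r2 b1 b2 L hr1 hr2 hb1 hb2 d12 e12 HsL HL;
case: (classic (exists x, [/\ x \in red ++ blue, x != r1, x != r2, x != b1 &
          x != b2 /\ hull4 x r1 r2 b1 b2])) => Hex.
- case: Hex => x [xS x1 x2 x3 [x4 Hx]].
  have := HL x xS x1 x2 x3 x4 Hx.
  by move: HsL; rewrite leqn0 => /nilP ->.
- apply: (final2 (r1:=r1) (r2:=r2) (b1:=b1) (b2:=b2)) => // t tS t1 t2 t3 t4 Ht; apply: Hex; exists t.
  by split.
- case: Hex => t [tS t1 t2 t3 [t4 Ht]].
  have tL := HL t tS t1 t2 t3 t4 Ht.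
  have HsL' : (size [seq y <- L | y != t] <= n)%N.
    by rewrite -ltnS; apply: leq_trans (size_filter_lt tL) HsL.
  have rS : forall x, x \in red -> x \in red ++ blue by move=> x xr; rewrite mem_cat xr.
  have bS : forall x, x \in blue -> x \in red ++ blue by move=> x xb; rewrite mem_cat xb orbT.
  move: (tS); rewrite mem_cat => /orP [tr|tb].
  + have Ho : orient b1 b2 r1 != 0.
      apply: GP; [exact: bS|exact: bS|exact: rS|exact: e12|
        by rewrite eq_sym; apply: dnb | by rewrite eq_sym; apply: dnb].
    have := step (P := fun x => x \in red ++ blue) Ht (u:=b1) (w:=b2)
       (L := L) (v1 := r1) (v2 := r2) (t := t).
    have t1' : r1 != t by rewrite eq_sym.
    have t2' : r2 != t by rewrite eq_sym.
    move=> /(_ t1' t2' d12 Ho HL) [] H.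
    * apply: (IH t r2 b1 b2 _ tr hr2 hb1 hb2 t2 e12 HsL' H).
    * apply: (IH r1 t b1 b2 _ hr1 tr hb1 hb2 _ e12 HsL' H); by rewrite eq_sym.
  + have Ho : orient r1 r2 b1 != 0.
      apply: GP; [exact: rS|exact: rS|exact: bS|exact: d12| by apply: dnb | by apply: dnb].
    have HL' : forall x, x \in red ++ blue -> x != b1 -> x != b2 -> x != r1 -> x != r2 ->
       hull4 x b1 b2 r1 r2 -> x \in L.
      by move=> x Px a b c d h; apply: HL x Px c d a b (hull4_cdab h).
    have := step (P := fun x => x \in red ++ blue) (hull4_cdab Ht)
       (L := L) (v1 := b1) (v2 := b2) (t := t).
    have t3' : b1 != t by rewrite eq_sym.
    have t4' : b2 != t by rewrite eq_sym.
    move=> /(_ t3' t4' e12 Ho HL') [] H.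
    * apply: (IH r1 r2 t b2 _ hr1 hr2 tb hb2 d12 t4 HsL').
      by move=> x Px a b c d h; apply: H x Px c d a b (hull4_cdab h).
    * apply: (IH r1 r2 b1 t _ hr1 hr2 hb1 tb d12 _ HsL'); first by rewrite eq_sym.
      by move=> x Px a b c d h; apply: H x Px c d a b (hull4_cdab h).
- apply: (final2 (r1:=r1) (r2:=r2) (b1:=b1) (b2:=b2)) => // t tS t1 t2 t3 t4 Ht; apply: Hex; exists t.
  by split.
Qed.

End Helpers.

Unset Implicit Arguments.

Theorem mainTheorem1 (R : realFieldType) (red blue : seq (point R)) :
  uniq red -> uniq blue -> [seq x <- red | x \in blue] = [::] ->
  general_position (red ++ blue) ->
  (2 <= size red)%N -> (2 <= size blue)%N ->
  exists a b c d : point R,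
    hole4 (red ++ blue) a b c d /\
    count (fun x => x \in red) [:: a; b; c; d] = 2%N /\
    count (fun x => x \in blue) [:: a; b; c; d] = 2%N.
Proof.
move=> Ur Ub Hdis GP.
case: red Ur Hdis GP => [|r1 [|r2 red]] //= Ur Hdis GP _.
case: blue Ub Hdis GP => [|b1 [|b2 blue]] //= Ub Hdis GP _.
have d12 : r1 != r2 by move: Ur; rewrite inE negb_or => /andP [/andP [] ].
have e12 : b1 != b2 by move: Ub; rewrite inE negb_or => /andP [/andP [] ].
apply: (@main_ind R (r1 :: r2 :: red) (b1 :: b2 :: blue) Hdis GP
   (size ((r1 :: r2 :: red) ++ (b1 :: b2 :: blue))) r1 r2 b1 b2
   ((r1 :: r2 :: red) ++ (b1 :: b2 :: blue))) => //.
- by rewrite !inE eqxx.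
- by rewrite !inE eqxx orbT.
- by rewrite !inE eqxx.
- by rewrite !inE eqxx orbT.
Qed.
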